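(* Assume the setting below. There exists a constant $C\geq0$ (independent of $h$ and $\Delta x$) such that $$\sup_{n=0,\ldots,N,\ m\in\mathbb Z^d}|\widehat v(t_n,x_m)-V(t_n,x_m)|\leq C\frac{|\Delta x|}{h}.$$
   Context: Let $T>0$, $d,p,q\ge1$, let $A\subseteq\mathbb R^q$ be a compact subset of a separable metric space, and let $\mu:[0,T]\times\mathbb R^d\times A\to\mathbb R^d$, $\sigma:[0,T]\times\mathbb R^d\times A\to\mathbb R^{d\times p}$ be continuous with $|\mu(t,x,a)-\mu(s,y,a)|+\|\sigma(t,x,a)-\sigma(s,y,a)\|\leq C_0(|x-y|+|t-s|^{1/2})$ for all arguments. Let $\psi:\mathbb R^d\to\mathbb R$ be continuous with $|\psi(x)-\psi(y)|\le L|x-y|$. Let $N\ge1$, $h=T/N$, $t_n=nh$. Let $M\ge2$ and $(\hat\lambda_i,\hat\xi_i)_{i=1}^{\hat M}$, $\hat\lambda_i\ge0$, $\hat\xi_i\in\mathbb R^p$, a cubature rule exact for all polynomials of degree $\le2M-1$ with respect to $\mathcal N(0,I_p)$. Define $\widehat v(t_N,\cdot)=\psi$ and $\widehat v(t_n,x)=\sup_{a\in A}\sum_i\hat\lambda_i\widehat v(t_{n+1},x+\mu(t_n,x,a)h+\sqrt h\sigma(t_n,x,a)\hat\xi_i)$ for $n=N-1,\dots,0$, $x\in\mathbb R^d$. Let $\Delta x=(\Delta x_1,\ldots,\Delta x_d)$ with $\Delta x_j>0$, grid $\mathcal G_{\Delta x}=\{x_m=m\Delta x:\ m\in\mathbb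 Z^d\}$ (componentwise product), and let $\mathcal I[\phi]$ be the standard multilinear interpolant of a function $\phi$ on this grid (so $\mathcal I[\phi](x_m)=\phi(x_m)$, $|\mathcal I[\phi](x)-\phi(x)|\le L_\phi|\Delta x|$ for $L_\phi$-Lipschitz $\phi$, and $\phi_1\le\phi_2\Rightarrow\mathcal I[\phi_1]\le\mathcal I[\phi_2]$). Define $V(t_N,x_m)=\psi(x_m)$ and for $n=N-1,\ldots,0$, $m\in\mathbb Z^d$: $V(t_n,x_m)=\sup_{a\in A}\sum_{i=1}^{\hat M}\hat\lambda_i\,\mathcal I[V(t_{n+1},\cdot)]\big(x_m+\mu(t_n,x_m,a)h+\sqrt h\sigma(t_n,x_m,a)\hat\xi_i\big)$. *)

(* Defs.v *)
From HB Require Import structures.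
From mathcomp Require Import all_boot all_order all_algebra.
From mathcomp Require Import all_classical all_reals all_analysis.
Set Implicit Arguments. Unset Strict Implicit. Unset Printing Implicit Defensive.
Import Order.TTheory GRing.Theory Num.Theory.
Import numFieldNormedType.Exports.
Local Open Scope classical_set_scope.
Local Open Scope ring_scope.

Definition enorm {R : realType} {d : nat} (v : 'cV[R]_d) : R :=
  Num.sqrt (\sum_(i < d) v i 0 ^+ 2).

Definition fnorm {R : realType} {d p : nat} (M : 'M[R]_(d, p)) : R :=
  Num.sqrt (\sum_(i < d) \sum_(j < p) M i j ^+ 2).

Definition gauss_moment {R : realType} (k : nat) : R :=
  Rintegral (@lebesgue_measure R) setT (fun x : R => x ^+ k * normal_pdf 0 1 x).

(* The cubature rule (lam_i, xi_i)_{i < Mh} on R^p is exact for all polynomials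
   of degree <= deg w.r.t. N(0, I_p): by linearity it is enough (and necessary)
   to be exact on every monomial z^alpha = prod_j z_j^(alpha_j), |alpha| <= deg,
   whose N(0,I_p)-expectation is prod_j E[Z^(alpha_j)], Z ~ N(0,1). *)
Definition cubature_exact {R : realType} (p Mh : nat) (lam : 'I_Mh -> R)
    (xi : 'I_Mh -> 'cV[R]_p) (deg : nat) : Prop :=
  forall alpha : 'I_p -> nat, (\sum_(j < p) alpha j <= deg)%N ->
    \sum_(i < Mh) lam i * \prod_(j < p) (xi i j 0) ^+ (alpha j)
    = \prod_(j < p) gauss_moment (alpha j).

Definition gridpt {R : realType} {d : nat} (dx : 'cV[R]_d) (m : 'I_d -> int)
  : 'cV[R]_d := \col_j ((m j)%:~R * dx j 0).

(* Standard multilinear (Q1) interpolant on the grid of steps dx. *)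
Definition interp {R : realType} {d : nat} (dx : 'cV[R]_d)
    (phi : ('I_d -> int) -> R) (x : 'cV[R]_d) : R :=
  let k := fun j : 'I_d => Num.floor (x j 0 / dx j 0) in
  let s := fun j : 'I_d => x j 0 / dx j 0 - (k j)%:~R in
  \sum_(b : {ffun 'I_d -> bool})
     (\prod_(j < d) (if b j then s j else 1 - s j)) *
     phi (fun j => k j + ((b j : nat) : int))%R.

Definition cstep {R : realType} {d p q Mh : nat}
    (mu : R -> 'cV[R]_d -> 'cV[R]_q -> 'cV[R]_d)
    (sigma : R -> 'cV[R]_d -> 'cV[R]_q -> 'M[R]_(d, p))
    (lam : 'I_Mh -> R) (xi : 'I_Mh -> 'cV[R]_p) (h : R)
    (f : 'cV[R]_d -> R) (t : R) (x : 'cV[R]_d) (a : 'cV[R]_q) : R :=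
  \sum_(i < Mh) lam i * f (x + h *: mu t x a + Num.sqrt h *: (sigma t x a *m xi i)).

(* vhat_rev j = \widehat v(t_{N-j}, .) *)
Fixpoint vhat_rev {R : realType} {d p q Mh : nat} (T : R) (N : nat)
    (A : set 'cV[R]_q)
    (mu : R -> 'cV[R]_d -> 'cV[R]_q -> 'cV[R]_d)
    (sigma : R -> 'cV[R]_d -> 'cV[R]_q -> 'M[R]_(d, p))
    (psi : 'cV[R]_d -> R) (lam : 'I_Mh -> R) (xi : 'I_Mh -> 'cV[R]_p)
    (j : nat) : 'cV[R]_d -> R :=
  match j with
  | 0%N => psi
  | j'.+1 => fun x =>
      let h := T / N%:R in
      sup [set cstep mu sigma lam xi h (vhat_rev T N A mu sigma psi lam xi j')
                     ((N - j'.+1)%:R * h) x a | a in A]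
  end.

Definition vhat {R : realType} {d p q Mh : nat} (T : R) (N : nat)
    (A : set 'cV[R]_q) mu sigma psi (lam : 'I_Mh -> R) (xi : 'I_Mh -> 'cV[R]_p)
    (n : nat) (x : 'cV[R]_d) : R :=
  @vhat_rev R d p q Mh T N A mu sigma psi lam xi (N - n) x.

(* Vgrid_rev j m = V(t_{N-j}, x_m) *)
Fixpoint Vgrid_rev {R : realType} {d p q Mh : nat} (T : R) (N : nat)
    (A : set 'cV[R]_q)
    (mu : R -> 'cV[R]_d -> 'cV[R]_q -> 'cV[R]_d)
    (sigma : R -> 'cV[R]_d -> 'cV[R]_q -> 'M[R]_(d, p))
    (psi : 'cV[R]_d -> R) (lam : 'I_Mh -> R) (xi : 'I_Mh -> 'cV[R]_p)
    (dx : 'cV[R]_d) (j : nat) : ('I_d -> int) -> R :=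
  match j with
  | 0%N => fun m => psi (gridpt dx m)
  | j'.+1 => fun m =>
      let h := T / N%:R in
      sup [set cstep mu sigma lam xi h
                 (interp dx (Vgrid_rev T N A mu sigma psi lam xi dx j'))
                 ((N - j'.+1)%:R * h) (gridpt dx m) a | a in A]
  end.

Definition Vgrid {R : realType} {d p q Mh : nat} (T : R) (N : nat)
    (A : set 'cV[R]_q) mu sigma psi (lam : 'I_Mh -> R) (xi : 'I_Mh -> 'cV[R]_p)
    (dx : 'cV[R]_d) (n : nat) (m : 'I_d -> int) : R :=
  @Vgrid_rev R d p q Mh T N A mu sigma psi lam xi dx (N - n) m.

(* Main.v *)
Require Import Defs.
From HB Require Import structures.
From mathcomp Require Import all_boot all_order all_algebra.
From mathcomp Require Import all_classical all_reals all_analysis.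
From mathcomp Require Import zify ring lra.
Import Order.TTheory GRing.Theory Num.Theory.
Import numFieldNormedType.Exports.
Local Open Scope classical_set_scope.
Local Open Scope ring_scope.

Section Gauss.
Variable R : realType.
Let mu := @lebesgue_measure R.

Lemma gm0 : gauss_moment 0 = 1 :> R.
Proof.
rewrite /gauss_moment /Rintegral.
under eq_integral do rewrite expr0 mul1r.
by rewrite integral_normal_pdf.
Qed.

Lemma pdf_even (x : R) : normal_pdf 0 1 (- x) = normal_pdf 0 1 x.
Proof. by rewrite /normal_pdf oner_eq0 /normal_fun !subr0 sqrrN. Qed.

Lemma pdf_cont : continuous (normal_pdf (0:R) 1).
Proof. by apply: continuous_normal_pdf; rewrite oner_eq0. Qed.

Lemma gm1 : gauss_moment 1 = 0 :> R.
Proof.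
rewrite /gauss_moment /Rintegral.
set f := fun x : R => _.
set c := (\int[mu]_(x in `[0%R, +oo[) (x * normal_pdf 0 1 x)%:E)%E.
have Hp : (\int[mu]_x (f^\+ x) = c)%E.
  rewrite /c integral_mkcond [RHS]integral_mkcond; apply: eq_integral => x _.
  rewrite /patch /= funeposE /f expr1 in_setT mem_setE in_itv /= andbT.
  case: ifP => x0.
    by rewrite max_l // lee_fin mulr_ge0 // normal_pdf_ge0.
  by rewrite max_r // lee_fin mulr_le0_ge0 ?normal_pdf_ge0 // ltW // ltNge x0.
have Hn : (\int[mu]_x (f^\- x) = c)%E.
  have -> : (\int[mu]_x (f^\- x) =
     \int[mu]_(x in `]-oo, (- 0)%R]) ((- x * normal_pdf 0 1 x)%:E))%E.
    rewrite integral_mkcond [RHS]integral_mkcond; apply: eq_integral => x _.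
    rewrite /patch /= funenegE /f expr1 -EFinN oppr0 in_setT mem_setE in_itv /=.
    case: ifP => x0.
      by rewrite mulNr max_l // lee_fin oppr_ge0 mulr_le0_ge0 ?normal_pdf_ge0.
    rewrite max_r // lee_fin oppr_le0 mulr_ge0 ?normal_pdf_ge0 //.
    by rewrite ltW // ltNge x0.
  rewrite ge0_integration_by_substitutionNy.
  - by apply: eq_integral => x _; rewrite /= opprK pdf_even.
  - apply: continuous_subspaceT => x.
    apply: continuousM; first exact: opp_continuous.
    exact: pdf_cont.
  - move=> x; rewrite oppr0 in_itv /= => x0.
    by rewrite mulr_ge0 ?normal_pdf_ge0 // oppr_ge0 ltW.
rewrite integralE Hp Hn.
clearbody c; clear Hp Hn; by case: c => [r||] //=; rewrite subrr.
Qed.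

End Gauss.

Section Mom.
Variable R : realType.
Hypothesis gm0 : gauss_moment 0 = 1 :> R.
Hypothesis gm1 : gauss_moment 1 = 0 :> R.
Variables (p Mh M : nat) (lam : 'I_Mh -> R) (xi : 'I_Mh -> 'cV[R]_p).
Hypothesis HM : (2 <= M)%N.
Hypothesis Hc : cubature_exact lam xi (2 * M - 1).

Lemma prod_pick (y : 'I_p -> R) k : \prod_(j < p) y j ^+ (j == k) = y k.
Proof.
rewrite (bigD1 k) //= eqxx expr1 big1 ?mulr1 // => j /negbTE ->.
by rewrite expr0.
Qed.

Lemma sum_pick k : (\sum_(j < p) (j == k) = 1)%N.
Proof. by rewrite (bigD1 k) //= eqxx big1 // => j /negbTE ->. Qed.

Lemma mom0 : \sum_(i < Mh) lam i = 1.
Proof.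
have := Hc (fun _ => 0%N); rewrite big1 // => /(_ isT).
under eq_bigr do rewrite big1 ?mulr1 //.
by move=> ->; rewrite big1.
Qed.

Lemma mom1 k : \sum_(i < Mh) lam i * xi i k 0 = 0.
Proof.
have H := Hc (fun j => (j == k) : nat); rewrite sum_pick in H.
have {}H := H ltac:(lia).
rewrite -(eq_bigr _ (fun i _ => congr1 (fun t => lam i * t) (prod_pick (fun j => xi i j 0) k))) H.
by rewrite (bigD1 k) //= eqxx gm1 mul0r.
Qed.

Definition c2g := gauss_moment 2 : R.

Lemma mom2 k l : \sum_(i < Mh) lam i * (xi i k 0 * xi i l 0)
   = if k == l then c2g else 0.
Proof.
have H := Hc (fun j => ((j == k) : nat) + (j == l))%N.
rewrite big_split /= !sum_pick in H.
have {}H := H ltac:(lia).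
have E : forall i, \prod_(j < p) xi i j 0 ^+ ((j == k) + (j == l))%N = xi i k 0 * xi i l 0.
  move=> i; under eq_bigr do rewrite exprD.
  by rewrite big_split /= !prod_pick.
rewrite -(eq_bigr _ (fun i _ => congr1 (fun t => lam i * t) (E i))) H.
case: eqP => [<-|/eqP kl].
  rewrite (bigD1 k) //= eqxx big1 ?mulr1 // => j /negbTE ->.
  exact: gm0.
rewrite (bigD1 k) //= eqxx (negbTE (kl : k != l)) /= addn0 gm1 mul0r //.
Qed.

End Mom.

Section Key.
Variable R : realType.
Variables (p Mh : nat) (lam : 'I_Mh -> R) (xi : 'I_Mh -> 'cV[R]_p) (c2 : R).
Hypothesis lam0 : forall i, 0 <= lam i.
Hypothesis m0 : \sum_(i < Mh) lam i = 1.
Hypothesis m1 : forall k, \sum_(i < Mh) lam i * xi i k 0 = 0.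
Hypothesis m2 : forall k l, \sum_(i < Mh) lam i * (xi i k 0 * xi i l 0)
   = if k == l then c2 else 0.

Lemma lin1 (a : 'I_p -> R) :
  \sum_(i < Mh) lam i * (\sum_(j < p) a j * xi i j 0) = 0.
Proof.
under eq_bigr do rewrite mulr_sumr.
rewrite exchange_big /= big1 // => j _.
rewrite (_ : \sum_(i < Mh) _ = a j * \sum_(i < Mh) lam i * xi i j 0).
  by rewrite m1 mulr0.
rewrite mulr_sumr; apply: eq_bigr => i _; ring.
Qed.

Lemma quad (a : 'I_p -> R) :
  \sum_(i < Mh) lam i * (\sum_(j < p) a j * xi i j 0) ^+ 2
  = c2 * \sum_(j < p) a j ^+ 2.
Proof.
transitivity (\sum_(j < p) \sum_(l < p) a j * a l *
   \sum_(i < Mh) lam i * (xi i j 0 * xi i l 0)).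
  under eq_bigr do rewrite expr2 mulr_suml mulr_sumr.
  under eq_bigr do under eq_bigr do rewrite mulr_sumr.
  rewrite exchange_big /=; apply: eq_bigr => j _.
  under eq_bigr do rewrite mulr_sumr.
  rewrite exchange_big /=; apply: eq_bigr => l _.
  rewrite mulr_sumr; apply: eq_bigr => i _; ring.
rewrite mulr_sumr; apply: eq_bigr => j _.
under eq_bigr do rewrite m2.
rewrite (bigD1 j) //= eqxx big1 ?addr0; first by rewrite expr2; ring.
by move=> l /negbTE; rewrite eq_sym => ->; rewrite mulr0.
Qed.

Lemma jensen_aux (a : 'I_Mh -> R) (m : R) :
  \sum_(i < Mh) lam i * (a i - m) ^+ 2 =
  \sum_(i < Mh) lam i * a i ^+ 2 + (- 2 * m) * (\sum_(i < Mh) lam i * a i)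
   + m ^+ 2 * \sum_(i < Mh) lam i.
Proof. rewrite !mulr_sumr -!big_split /=; apply: eq_bigr => i _; ring. Qed.

Lemma jensen (a : 'I_Mh -> R) :
  (\sum_(i < Mh) lam i * a i) ^+ 2 <= \sum_(i < Mh) lam i * a i ^+ 2.
Proof.
have H : 0 <= \sum_(i < Mh) lam i * (a i - \sum_(i < Mh) lam i * a i) ^+ 2.
  by apply: sumr_ge0 => i _; rewrite mulr_ge0 // sqr_ge0.
move: H; rewrite jensen_aux m0; move: (\sum_(i < Mh) lam i * a i) => m.
rewrite !expr2; lra.
Qed.

Lemma avg_le (a : 'I_Mh -> R) (B : R) : (forall i, 0 <= a i) -> 0 <= B ->
  \sum_(i < Mh) lam i * a i ^+ 2 <= B ^+ 2 ->
  \sum_(i < Mh) lam i * a i <= B.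
Proof.
move=> a0 B0 H; have J := jensen a.
have S0 : 0 <= \sum_(i < Mh) lam i * a i.
  by apply: sumr_ge0 => i _; rewrite mulr_ge0.
have : (\sum_(i < Mh) lam i * a i) ^+ 2 <= B ^+ 2 by exact: le_trans J H.
rewrite !expr2; nra.
Qed.

Definition nu {d} (v : 'cV[R]_d) := \sum_(k < d) v k 0 ^+ 2.

Lemma nu_ge0 {d} (v : 'cV[R]_d) : 0 <= nu v.
Proof. by apply: sumr_ge0 => k _; rewrite sqr_ge0. Qed.

Lemma enorm_sqr {d} (v : 'cV[R]_d) : enorm v ^+ 2 = nu v.
Proof. by rewrite /enorm sqr_sqrtr // nu_ge0. Qed.

Lemma enorm_ge0 {d} (v : 'cV[R]_d) : 0 <= enorm v.
Proof. exact: sqrtr_ge0. Qed.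

Lemma fnorm_sqr {d} (S : 'M[R]_(d, p)) :
  fnorm S ^+ 2 = \sum_(k < d) \sum_(j < p) S k j ^+ 2.
Proof.
rewrite /fnorm sqr_sqrtr //; apply: sumr_ge0 => k _; apply: sumr_ge0 => j _.
exact: sqr_ge0.
Qed.

Lemma fnorm_ge0 {d} (S : 'M[R]_(d, p)) : 0 <= fnorm S.
Proof. exact: sqrtr_ge0. Qed.

Lemma key {d} (u : 'cV[R]_d) (S : 'M[R]_(d, p)) (s : R) :
  \sum_(i < Mh) lam i * nu (u + s *: (S *m xi i))
  = nu u + s ^+ 2 * c2 * fnorm S ^+ 2.
Proof.
rewrite fnorm_sqr /nu.
under eq_bigr do under eq_bigr do rewrite !mxE.
under eq_bigr do rewrite mulr_sumr.
rewrite exchange_big /= mulr_sumr -big_split /=; apply: eq_bigr => k _.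
have L := lin1 (fun j => S k j); have Q := quad (fun j => S k j).
transitivity (u k 0 ^+ 2 * \sum_(i < Mh) lam i
   + 2 * s * u k 0 * \sum_(i < Mh) lam i * (\sum_(j < p) S k j * xi i j 0)
   + s ^+ 2 * \sum_(i < Mh) lam i * (\sum_(j < p) S k j * xi i j 0) ^+ 2).
  rewrite !mulr_sumr -!big_split /=; apply: eq_bigr => i _; ring.
rewrite L Q m0; ring.
Qed.


Lemma zmod_id (V : zmodType) (x a c y b e : V) :
  x + a + c - (y + b + e) = x - y + (a - b) + (c - e).
Proof. by rewrite (addrACA x (-y) a (-b)) (addrACA (x + a) (-y + -b) c (-e)) !opprD. Qed.

Lemma nu_add {d} (a b : 'cV[R]_d) (h : R) : 0 <= h ->
  nu (a + h *: b) <= (1 + h) * nu a + (h + h ^+ 2) * nu b.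
Proof.
move=> h0; rewrite /nu !mulr_sumr -big_split /=; apply: ler_sum => k _.
rewrite !mxE.
have H : 0 <= h * (a k 0 - b k 0) ^+ 2 by rewrite mulr_ge0 // sqr_ge0.
move: H; rewrite !expr2; nra.
Qed.

Lemma step_lip {d} (f : 'cV[R]_d -> R) (Lf h C0 K : R) (x y mx my : 'cV[R]_d)
    (Sx Sy : 'M[R]_(d, p)) :
  0 <= Lf -> 0 <= h -> (forall z w, `|f z - f w| <= Lf * enorm (z - w)) ->
  enorm (mx - my) + fnorm (Sx - Sy) <= C0 * enorm (x - y) ->
  1 + C0 ^+ 2 + h * C0 ^+ 2 + `|c2| * C0 ^+ 2 <= K ->
  `|\sum_(i < Mh) lam i * f (x + h *: mx + Num.sqrt h *: (Sx *m xi i))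
    - \sum_(i < Mh) lam i * f (y + h *: my + Num.sqrt h *: (Sy *m xi i))|
  <= Lf * ((1 + h * K) * enorm (x - y)).
Proof.
move=> Lf0 h0 Lip HC HK.
set e := enorm (x - y).
have e0 : 0 <= e := enorm_ge0 _.
set w := fun i => x - y + h *: (mx - my) + Num.sqrt h *: ((Sx - Sy) *m xi i).
have wE : forall i, (x + h *: mx + Num.sqrt h *: (Sx *m xi i))
   - (y + h *: my + Num.sqrt h *: (Sy *m xi i)) = w i.
  by move=> i; rewrite zmod_id /w scalerBr mulmxBl scalerBr.
rewrite -sumrB; apply: le_trans (ler_norm_sum _ _ _) _.
apply: le_trans (_ : \sum_(i < Mh) lam i * (Lf * enorm (w i)) <= _).
  apply: ler_sum => i _; rewrite -mulrBr normrM ger0_norm // -wE.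
  by apply: ler_wpM2l => //; exact: Lip.
under eq_bigr do rewrite mulrCA.
rewrite -mulr_sumr; apply: ler_wpM2l => //.
have hK0 : 0 <= h * K.
  apply: mulr_ge0 => //; apply: le_trans HK.
  have : 0 <= `|c2| * C0 ^+ 2 by rewrite mulr_ge0 // sqr_ge0.
  have : 0 <= h * C0 ^+ 2 by rewrite mulr_ge0 // sqr_ge0.
  have := sqr_ge0 C0; lra.
apply: avg_le; first by move=> i; exact: enorm_ge0.
  by rewrite mulr_ge0 // addr_ge0.
under eq_bigr do rewrite enorm_sqr.
rewrite /w key sqr_sqrtr //.
have Hu := @nu_add _ (x - y) (mx - my) h h0.
have n1 : nu (x - y) = e ^+ 2 by rewrite enorm_sqr.
have em0 := enorm_ge0 (mx - my); have ef0 := fnorm_ge0 (Sx - Sy).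
have Cm : enorm (mx - my) <= C0 * e by apply: le_trans HC; rewrite lerDl.
have Cf : fnorm (Sx - Sy) <= C0 * e by apply: le_trans HC; rewrite lerDr.
have n2 : nu (mx - my) <= (C0 * e) ^+ 2.
  rewrite -enorm_sqr !expr2; nra.
have n3 : fnorm (Sx - Sy) ^+ 2 <= (C0 * e) ^+ 2.
  rewrite !expr2; nra.
have c2a : c2 * fnorm (Sx - Sy) ^+ 2 <= `|c2| * (C0 * e) ^+ 2.
  apply: le_trans (_ : `|c2| * fnorm (Sx - Sy) ^+ 2 <= _).
    by rewrite ler_wpM2r ?sqr_ge0 // ler_norm.
  by rewrite ler_wpM2l.
set F := fnorm (Sx - Sy) in n3 c2a *.
set nb := nu (mx - my) in Hu n2 *.
rewrite n1 in Hu.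
have X1 : (h + h ^+ 2) * nb <= (h + h ^+ 2) * (C0 * e) ^+ 2.
  by rewrite ler_wpM2l // addr_ge0 // sqr_ge0.
have X2 : h * (c2 * F ^+ 2) <= h * (`|c2| * (C0 * e) ^+ 2) by rewrite ler_wpM2l.
have X3 : e ^+ 2 * (h * (1 + C0 ^+ 2 + h * C0 ^+ 2 + `|c2| * C0 ^+ 2)) <= e ^+ 2 * (h * K).
  by rewrite ler_wpM2l ?sqr_ge0 // ler_wpM2l.
have X4 : 0 <= e ^+ 2 * (h * K) * (h * K).
  by apply: mulr_ge0 => //; apply: mulr_ge0 => //; exact: sqr_ge0.
rewrite -mulrA; move: X1 X2 X3 X4 Hu; rewrite !expr2; nra.
Qed.

End Key.

Section Sup.
Variable R : realType.

Lemma sup_shift (Q : Type) (A : set Q) (F G : Q -> R) (c : R) : 0 <= c ->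
  (forall a, A a -> F a <= G a + c) -> (forall a, A a -> G a <= F a + c) ->
  sup [set F a | a in A] <= sup [set G a | a in A] + c.
Proof.
move=> c0 FG GF.
have [[a0 Aa0]|eA] := pselect (A !=set0); last first.
  have A0 : A = set0.
    by apply/seteqP; split => // a Aa; apply: eA; exists a.
  by rewrite A0 !image_set0 sup0 add0r.
have [Gb|nb] := pselect (has_ubound [set G a | a in A]).
  apply: ge_sup; first by exists (F a0), a0.
  move=> _ [a Aa <-]; apply: le_trans (FG a Aa) _; rewrite lerD2r.
  by apply: ub_le_sup => //; exists a.
have nbF : ~ has_ubound [set F a | a in A].
  move=> [B HB]; apply: nb; exists (B + c) => _ [a Aa <-].
  apply: le_trans (GF a Aa) _; rewrite lerD2r; apply: HB; by exists a.
rewrite !sup_out ?add0r //; by move=> [].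
Qed.

Lemma sup_close (Q : Type) (A : set Q) (F G : Q -> R) (c : R) : 0 <= c ->
  (forall a, A a -> `|F a - G a| <= c) ->
  `|sup [set F a | a in A] - sup [set G a | a in A]| <= c.
Proof.
move=> c0 H.
have [[a0 Aa0]|eA] := pselect (A !=set0); last first.
  have A0 : A = set0.
    by apply/seteqP; split => // a Aa; apply: eA; exists a.
  by rewrite A0 !image_set0 subrr normr0.
have h1 := @sup_shift Q A F G c c0.
have h2 := @sup_shift Q A G F c c0.
have X1 : sup [set F a | a in A] <= sup [set G a | a in A] + c.
  apply: h1 => a Aa; have := H a Aa; rewrite ler_norml; lra.
have X2 : sup [set G a | a in A] <= sup [set F a | a in A] + c.
  apply: h2 => a Aa; have := H a Aa; rewrite ler_norml; lra.
rewrite ler_norml; lra.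
Qed.


Section Interp.
Variables (d : nat) (dx : 'cV[R]_d).
Hypothesis dx0 : forall j, 0 < dx j 0.

Definition kk (x : 'cV[R]_d) j := Num.floor (x j 0 / dx j 0).
Definition ss (x : 'cV[R]_d) j := x j 0 / dx j 0 - (kk x j)%:~R.
Definition ww (x : 'cV[R]_d) (b : {ffun 'I_d -> bool}) :=
  \prod_(j < d) (if b j then ss x j else 1 - ss x j).

Lemma ss01 x j : 0 <= ss x j < 1.
Proof.
rewrite /ss /kk; have /andP[h1 h2] := floor_itv (x j 0 / dx j 0).
rewrite intrD1 in h2; apply/andP; split; lra.
Qed.

Lemma ww_ge0 x b : 0 <= ww x b.
Proof.
apply: prodr_ge0 => j _; have /andP[h1 h2] := ss01 x j.
case: (b j); lra.
Qed.

Lemma ww_sum x : \sum_(b : {ffun 'I_d -> bool}) ww x b = 1.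
Proof.
rewrite /ww -(bigA_distr_bigA (fun j (bb : bool) => if bb then ss x j else 1 - ss x j)).
by rewrite big1 // => j _; rewrite big_bool /= addrC subrK.
Qed.

Lemma interpE (phi : ('I_d -> int) -> R) x :
  interp dx phi x = \sum_(b : {ffun 'I_d -> bool})
     ww x b * phi (fun j => kk x j + ((b j : nat) : int))%R.
Proof. by []. Qed.

Lemma interp_diff (g1 g2 : ('I_d -> int) -> R) c x :
  (forall m, `|g1 m - g2 m| <= c) -> `|interp dx g1 x - interp dx g2 x| <= c.
Proof.
move=> H; rewrite !interpE -sumrB.
apply: le_trans (ler_norm_sum _ _ _) _.
apply: le_trans (_ : \sum_(b : {ffun 'I_d -> bool}) ww x b * c <= _).
  apply: ler_sum => b _; rewrite -mulrBr normrM ger0_norm ?ww_ge0 //.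
  by apply: ler_wpM2l; [exact: ww_ge0| exact: H].
by rewrite -mulr_suml ww_sum mul1r.
Qed.

Lemma grid_close x (b : {ffun 'I_d -> bool}) :
  enorm (gridpt dx (fun j => kk x j + ((b j : nat) : int))%R - x) <= enorm dx.
Proof.
rewrite /enorm ler_sqrt; last by apply: sumr_ge0 => j _; exact: sqr_ge0.
apply: ler_sum => j _; rewrite !mxE intrD.
have dj := dx0 j.
have /andP[h1 h2] := floor_itv (x j 0 / dx j 0).
rewrite intrD1 in h2.
rewrite -/(kk x j) in h1 h2.
have e1 : (kk x j)%:~R * dx j 0 <= x j 0.
  by rewrite -ler_pdivlMr.
have e2 : x j 0 < ((kk x j)%:~R + 1) * dx j 0.
  by rewrite -ltr_pdivrMr.
move: (kk x j)%:~R e1 e2 => q e1 e2.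
case: (b j) => /=; rewrite ?add0r ?addr0 !expr2; nra.
Qed.

Lemma interp_lip (phi : 'cV[R]_d -> R) Lp x : 0 <= Lp ->
  (forall z w, `|phi z - phi w| <= Lp * enorm (z - w)) ->
  `|interp dx (fun m => phi (gridpt dx m)) x - phi x| <= Lp * enorm dx.
Proof.
move=> L0 Lip.
rewrite interpE -[phi x]mul1r -(ww_sum x) mulr_suml -sumrB.
apply: le_trans (ler_norm_sum _ _ _) _.
apply: le_trans (_ : \sum_(b : {ffun 'I_d -> bool}) ww x b * (Lp * enorm dx) <= _).
  apply: ler_sum => b _; rewrite -mulrBr normrM ger0_norm ?ww_ge0 //.
  apply: ler_wpM2l; first exact: ww_ge0.
  apply: le_trans (Lip _ _) _; apply: ler_wpM2l => //; exact: grid_close.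
by rewrite -mulr_suml ww_sum mul1r.
Qed.

End Interp.
End Sup.


Lemma cstep_close (R : realType) (Mh : nat) (lam : 'I_Mh -> R) d
   (f g : 'cV[R]_d -> R) (z : 'I_Mh -> 'cV[R]_d) (c : R) :
  (forall i, 0 <= lam i) -> \sum_(i < Mh) lam i = 1 ->
  (forall w, `|f w - g w| <= c) ->
  `|\sum_(i < Mh) lam i * f (z i) - \sum_(i < Mh) lam i * g (z i)| <= c.
Proof.
move=> l0 l1 H; rewrite -sumrB.
apply: le_trans (ler_norm_sum _ _ _) _.
apply: le_trans (_ : \sum_(i < Mh) lam i * c <= _).
  apply: ler_sum => i _; rewrite -mulrBr normrM ger0_norm //.
  by apply: ler_wpM2l.
by rewrite -mulr_suml l1 mul1r.
Qed.

Theorem proposition3p4 (R : realType) (T : R) (d p q : nat)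
    (A : set 'cV[R]_q)
    (mu : R -> 'cV[R]_d -> 'cV[R]_q -> 'cV[R]_d)
    (sigma : R -> 'cV[R]_d -> 'cV[R]_q -> 'M[R]_(d, p))
    (C0 L : R) (psi : 'cV[R]_d -> R)
    (M Mh : nat) (lam : 'I_Mh -> R) (xi : 'I_Mh -> 'cV[R]_p) :
  0 < T -> (1 <= d)%N -> (1 <= p)%N -> (1 <= q)%N ->
  compact A ->
  {within [set z : R * 'cV[R]_d * 'cV[R]_q | 0 <= z.1.1 <= T /\ A z.2],
     continuous (fun z : R * 'cV[R]_d * 'cV[R]_q => mu z.1.1 z.1.2 z.2)} ->
  {within [set z : R * 'cV[R]_d * 'cV[R]_q | 0 <= z.1.1 <= T /\ A z.2],
     continuous (fun z : R * 'cV[R]_d * 'cV[R]_q => sigma z.1.1 z.1.2 z.2)} ->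
  (forall t s x y a, 0 <= t <= T -> 0 <= s <= T -> A a ->
     enorm (mu t x a - mu s y a) + fnorm (sigma t x a - sigma s y a)
     <= C0 * (enorm (x - y) + Num.sqrt `|t - s|)) ->
  continuous psi ->
  (forall x y, `|psi x - psi y| <= L * enorm (x - y)) ->
  (2 <= M)%N ->
  (forall i, 0 <= lam i) ->
  cubature_exact lam xi (2 * M - 1) ->
  exists C : R, 0 <= C /\
    forall (N : nat) (dx : 'cV[R]_d), (1 <= N)%N -> (forall j, 0 < dx j 0) ->
      forall (n : nat) (m : 'I_d -> int), (n <= N)%N ->
        `|vhat T N A mu sigma psi lam xi n (gridpt dx m)
          - Vgrid T N A mu sigma psi lam xi dx n m|
        <= C * enorm dx / (T / N%:R).
Proof.
move=> T0 d1 p1 q1 cA cmu csig HL cpsi Lpsi M2 lam0 Hc.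
have m0 := @mom0 R (gm0 R) _ _ _ _ _ Hc.
have m1 := @mom1 R (gm1 R) _ _ _ _ _ M2 Hc.
have m2 := @mom2 R (gm0 R) (gm1 R) _ _ _ _ _ M2 Hc.
set c2 := c2g R in m2.
set K := 1 + C0 ^+ 2 + T * C0 ^+ 2 + `|c2| * C0 ^+ 2.
set Lmax := `|L| * expR (K * T).
have K0 : 0 <= K.
  have := sqr_ge0 C0; have : 0 <= T * C0 ^+ 2 by rewrite mulr_ge0 ?sqr_ge0 // ltW.
  have : 0 <= `|c2| * C0 ^+ 2 by rewrite mulr_ge0 ?sqr_ge0.
  rewrite /K; lra.
have Lmax0 : 0 <= Lmax by rewrite mulr_ge0 // expR_ge0.
exists (T * Lmax); split; first by rewrite mulr_ge0 // ltW.
move=> N dx N1 dx0 n m Hn.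
set h := T / N%:R.
have N0 : 0 < N%:R :> R by rewrite ltr0n.
have h0 : 0 < h by rewrite divr_gt0.
have Nh : N%:R * h = T by rewrite /h mulrC divfK // gt_eqF.
have hT : h <= T.
  rewrite -Nh; have : (1:R) <= N%:R by rewrite ler1n.
  have := h0; nra.
have tau (j : nat) : 0 <= (N - j.+1)%:R * h <= T.
  apply/andP; split; first by rewrite mulr_ge0 // ltW.
  have : ((N - j.+1)%:R : R) <= N%:R by rewrite ler_nat leq_subr.
  rewrite -Nh; have := h0; nra.
have HK : 1 + C0 ^+ 2 + h * C0 ^+ 2 + `|c2| * C0 ^+ 2 <= K.
  rewrite /K lerD2r lerD2l; apply: ler_wpM2r => //; exact: sqr_ge0.
have hK0 : 0 <= h * K by rewrite mulr_ge0 // ltW.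
have Lip : forall j x y, `|vhat_rev T N A mu sigma psi lam xi j x
      - vhat_rev T N A mu sigma psi lam xi j y|
      <= (`|L| * (1 + h * K) ^+ j) * enorm (x - y).
  elim=> [|j IH] x y /=.
    rewrite expr0 mulr1; apply: le_trans (Lpsi x y) _.
    by rewrite ler_wpM2r ?enorm_ge0 // ler_norm.
  apply: sup_close.
    by rewrite !mulr_ge0 ?enorm_ge0 ?exprn_ge0 // addr_ge0.
  move=> a Aa; rewrite /cstep -/h.
  set tau' := (N - j.+1)%:R * h.
  have HC : enorm (mu tau' x a - mu tau' y a) + fnorm (sigma tau' x a - sigma tau' y a)
     <= C0 * enorm (x - y).
    by have := HL tau' tau' x y a (tau j) (tau j) Aa; rewrite subrr normr0 sqrtr0 addr0.
  have Lj0 : 0 <= `|L| * (1 + h * K) ^+ j by rewrite mulr_ge0 // exprn_ge0 // addr_ge0.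
  have := @step_lip R _ _ lam xi c2 lam0 m0 m1 m2 _
     (vhat_rev T N A mu sigma psi lam xi j) (`|L| * (1 + h * K) ^+ j) h C0 K x y
     (mu tau' x a) (mu tau' y a) (sigma tau' x a) (sigma tau' y a)
     Lj0 (ltW h0) IH HC HK.
  by rewrite exprS; congr (_ <= _); ring.
have Lj (j : nat) : (j <= N)%N -> `|L| * (1 + h * K) ^+ j <= Lmax.
  move=> jN; rewrite /Lmax ler_wpM2l //.
  apply: le_trans (_ : (1 + h * K) ^+ N <= _).
    by apply: ler_weXn2l => //; rewrite lerDl.
  rewrite -Nh (_ : K * (N%:R * h) = N%:R * (h * K)); last by ring.
  rewrite expRM_natl.
  apply: lerXn2r; rewrite ?nnegrE ?expR_ge0 ?addr_ge0 //.
  by rewrite mulrC expR_ge1Dx.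
have Err : forall j, (j <= N)%N -> forall m,
   `|vhat_rev T N A mu sigma psi lam xi j (gridpt dx m)
     - Vgrid_rev T N A mu sigma psi lam xi dx j m| <= j%:R * Lmax * enorm dx.
  elim=> [|j IH] jN m' /=.
    by rewrite subrr normr0 mul0r mul0r.
  apply: sup_close.
    by rewrite !mulr_ge0 ?enorm_ge0.
  move=> a Aa; rewrite /cstep -/h.
  apply: cstep_close => // z.
  set f := vhat_rev T N A mu sigma psi lam xi j.
  set V := Vgrid_rev T N A mu sigma psi lam xi dx j.
  have E1 := @interp_lip R d dx dx0 f (`|L| * (1 + h * K) ^+ j) z
     ltac:(by rewrite mulr_ge0 // exprn_ge0 // addr_ge0) (Lip j).
  have E2 := @interp_diff R d dx (fun m => f (gridpt dx m)) V (j%:R * Lmax * enorm dx) z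
     (IH (ltnW jN)).
  have E3 := Lj j (ltnW jN).
  have e0 := @enorm_ge0 R _ dx.
  have E4 : `|L| * (1 + h * K) ^+ j * enorm dx <= Lmax * enorm dx by rewrite ler_wpM2r.
  rewrite -natr1.
  have : `|f z - interp dx V z| <=
     `|f z - interp dx (fun m => f (gridpt dx m)) z| +
     `|interp dx (fun m => f (gridpt dx m)) z - interp dx V z|.
    by rewrite -[X in `|X|](subrKA (interp dx (fun m => f (gridpt dx m)) z)); exact: ler_normD.
  rewrite distrC in E1.
  move: E1 E2 E4; lra.
rewrite /vhat /Vgrid.
apply: le_trans (Err (N - n)%N (leq_subr _ _) m) _.
have -> : T * Lmax * enorm dx / h = N%:R * Lmax * enorm dx.
  by rewrite -Nh; field; rewrite gt_eqF.
by rewrite ler_wpM2r ?enorm_ge0 // ler_wpM2r // ler_nat leq_subr.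
Qed.
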